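(* Every algebra in the class $\mathcal A$ has a distributive congruence lattice (i.e. $\mathcal A$ is congruence distributive). The variety $\mathcal W$ is arithmetical (congruence permutable and congruence distributive) and congruence regular (for every $\mathbf B\in\mathcal W$, every element $a$ of $\mathbf B$ and all congruences $\Theta,\Phi$ of $\mathbf B$, $[a]\Theta=[a]\Phi$ implies $\Theta=\Phi$).
   Context: A bounded directoid with unary operation is an algebra $(P,\sqcup,{}',0,1)$ of type $(2,1,0,0)$ satisfying $x\sqcup x=x$, $x\sqcup y=y\sqcup x$, $x\sqcup((x\sqcup y)\sqcup z)=(x\sqcup y)\sqcup z$, $x\sqcup 0=x$, $x\sqcup 1=1$. Its induced order is $x\leq y$ iff $x\sqcup y=y$. Put $x\sqcap y:=(x'\sqcup y')'$. Conditions: (i) for all $x,y,z$: if $(x\sqcup z)\sqcup(((x'\sqcap w)\sqcap((x\sqcup y)\sqcap w))\sqcup z)=z$ for all $w\in P$, then $(x\sqcup y)\sqcup z=z$; (ii) $(x\sqcap y)\sqcup x\approx x$; (iii) $(x\sqcup y)\sqcup(x'\sqcup y)\approx 1$; (iv) $x''\approx x$; (i') $x\sqcup y\leq(x\sqcup z)\sqcup((x'\sqcap(x\sqcup y))\sqcup z)$ (as an identity, via the induced order). $\mathcal A$ is the class of bounded directoids with unary operation satisfying (i)–(iv) (equivalently, the directoids assigned to generalized orthomodular posets); $\mathcal W$ is the variety of bounded directoids with unary operation satisfying (ii), (iii), (iv) and (i'). *)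

(* Defs.v *)
Set Implicit Arguments.
(* Plain Rocq (no library needed). An algebra of type (2,1,0,0) is given by a
   carrier T with operations jn (⊔), cm (unary '), zero, one. *)

Section Defs.
Variables (T : Type) (jn : T -> T -> T) (cm : T -> T) (zero one : T).

Definition mt (x y : T) : T := cm (jn (cm x) (cm y)).
Definition dle (x y : T) : Prop := jn x y = y.

Definition bounded_directoid_unary : Prop :=
  (forall x, jn x x = x) /\
  (forall x y, jn x y = jn y x) /\
  (forall x y z, jn x (jn (jn x y) z) = jn (jn x y) z) /\
  (forall x, jn x zero = x) /\
  (forall x, jn x one = one).

Definition cond_i : Prop :=
  forall x y z,
    (forall w, jn (jn x z) (jn (mt (mt (cm x) w) (mt (jn x y) w)) z) = z) ->
    jn (jn x y) z = z.
Definition cond_ii : Prop := forall x y, jn (mt x y) x = x.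
Definition cond_iii : Prop := forall x y, jn (jn x y) (jn (cm x) y) = one.
Definition cond_iv : Prop := forall x, cm (cm x) = x.
Definition cond_i' : Prop :=
  forall x y z, dle (jn x y) (jn (jn x z) (jn (mt (cm x) (jn x y)) z)).

Definition in_class_A : Prop :=
  bounded_directoid_unary /\ cond_i /\ cond_ii /\ cond_iii /\ cond_iv.
Definition in_variety_W : Prop :=
  bounded_directoid_unary /\ cond_ii /\ cond_iii /\ cond_iv /\ cond_i'.

Definition congruence (R : T -> T -> Prop) : Prop :=
  (forall x, R x x) /\
  (forall x y, R x y -> R y x) /\
  (forall x y z, R x y -> R y z -> R x z) /\
  (forall x1 y1 x2 y2, R x1 y1 -> R x2 y2 -> R (jn x1 x2) (jn y1 y2)) /\
  (forall x y, R x y -> R (cm x) (cm y)).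

Definition rel_eq (R S : T -> T -> Prop) : Prop := forall x y, R x y <-> S x y.

Definition con_meet (R S : T -> T -> Prop) : T -> T -> Prop :=
  fun x y => R x y /\ S x y.
Definition con_join (R S : T -> T -> Prop) : T -> T -> Prop :=
  fun x y => forall C, congruence C ->
    (forall a b, R a b -> C a b) -> (forall a b, S a b -> C a b) -> C x y.

Definition con_distributive : Prop :=
  forall R S U, congruence R -> congruence S -> congruence U ->
    rel_eq (con_meet R (con_join S U)) (con_join (con_meet R S) (con_meet R U)).

Definition con_permutable : Prop :=
  forall R S, congruence R -> congruence S ->
    forall x y, (exists z, R x z /\ S z y) <-> (exists z, S x z /\ R z y).

Definition con_regular : Prop :=
  forall R S, congruence R -> congruence S ->
    forall a, (forall x, R a x <-> S a x) -> rel_eq R S.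

End Defs.

(* Main.v *)
Require Import Defs.

Lemma join_cong (T : Type) (jn : T -> T -> T) (cm : T -> T) (S U : T -> T -> Prop) :
  congruence jn cm (con_join jn cm S U).
Proof.
  unfold congruence, con_join. repeat split.
  - intros x C [Hr _] _ _. apply Hr.
  - intros x y H C HC h1 h2. pose proof HC as HC0. destruct HC as [a [b [c [d e]]]].
    apply b, H; auto.
  - intros x y z H1 H2 C HC h1 h2. pose proof HC as HC0. destruct HC as [a [b [c [d e]]]].
    apply c with y; [apply H1|apply H2]; auto.
  - intros x1 y1 x2 y2 H1 H2 C HC h1 h2. pose proof HC as HC0. destruct HC as [a [b [c [d e]]]].
    apply d; [apply H1|apply H2]; auto.
  - intros x y H C HC h1 h2. pose proof HC as HC0. destruct HC as [a [b [c [d e]]]].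
    apply e; apply H; auto.
Qed.

Lemma meet_cong (T : Type) (jn : T -> T -> T) (cm : T -> T) (R S : T -> T -> Prop) :
  congruence jn cm R -> congruence jn cm S -> congruence jn cm (con_meet R S).
Proof.
  intros [a [b [c [d e]]]] [a' [b' [c' [d' e']]]]. unfold con_meet.
  repeat split; intros; try (destruct H; destruct H0); eauto.
  all: try (destruct H; eauto).
Qed.

Inductive tc {T : Type} (S U : T -> T -> Prop) : T -> T -> Prop :=
| tcS : forall x y, S x y -> tc S U x y
| tcU : forall x y, U x y -> tc S U x y
| tcT : forall x y z, tc S U x y -> tc S U y z -> tc S U x z.

Lemma join_tc (T : Type) (jn : T -> T -> T) (cm : T -> T) (S U : T -> T -> Prop) :
  congruence jn cm S -> congruence jn cm U ->
  forall x y, con_join jn cm S U x y -> tc S U x y.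
Proof.
  intros HS HU x y H. apply H.
  - destruct HS as [Sr [Ss [St [Sj Sc]]]]. destruct HU as [Ur [Us [Ut [Uj Uc]]]].
    assert (Hsym : forall a b, tc S U a b -> tc S U b a).
    { intros a b h; induction h. apply tcS; auto. apply tcU; auto. eapply tcT; eauto. }
    repeat split.
    + intro a. apply tcS, Sr.
    + exact Hsym.
    + intros a b c h1 h2. eapply tcT; eauto.
    + intros x1 y1 x2 y2 h1 h2.
      apply tcT with (jn y1 x2).
      * clear h2. induction h1. apply tcS; auto. apply tcU; auto. eapply tcT; eauto.
      * clear h1. induction h2. apply tcS; auto. apply tcU; auto. eapply tcT; eauto.
    + intros a b h. induction h. apply tcS; auto. apply tcU; auto. eapply tcT; eauto.
  - intros; apply tcS; auto.
  - intros; apply tcU; auto.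
Qed.

Lemma join_incl_l (T : Type) (jn : T -> T -> T) (cm : T -> T) (S U : T -> T -> Prop) x y :
  S x y -> con_join jn cm S U x y.
Proof. intros h C _ h1 _. auto. Qed.
Lemma join_incl_r (T : Type) (jn : T -> T -> T) (cm : T -> T) (S U : T -> T -> Prop) x y :
  U x y -> con_join jn cm S U x y.
Proof. intros h C _ _ h2. auto. Qed.
Lemma join_trans (T : Type) (jn : T -> T -> T) (cm : T -> T) (S U : T -> T -> Prop) x y z :
  con_join jn cm S U x y -> con_join jn cm S U y z -> con_join jn cm S U x z.
Proof. intros h1 h2 C HC a b. pose proof HC as HC0. destruct HC as [_ [_ [t _]]].
  apply t with y; [apply h1|apply h2]; auto. Qed.

Lemma maj_cd (T : Type) (jn : T -> T -> T) (cm : T -> T) (m : T -> T -> T -> T) :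
  (forall R, congruence jn cm R -> forall a b c a' b' c',
      R a a' -> R b b' -> R c c' -> R (m a b c) (m a' b' c')) ->
  (forall x y, m x x y = x) -> (forall x y, m x y x = x) -> (forall x y, m y x x = x) ->
  con_distributive jn cm.
Proof.
  intros Hm m1 m2 m3 R S U HR HS HU x y. split.
  - intros [Hxy HJ].
    pose proof (@join_tc T jn cm S U HS HU x y HJ) as Htc.
    assert (K : forall a b, tc S U a b ->
              con_join jn cm (con_meet R S) (con_meet R U) (m x a y) (m x b y)).
    { pose proof HR as HR0. destruct HR as [Rr [Rs [Rt [Rj Rc]]]].
      assert (Hx : forall a, R (m x a y) x).
      { intro a. assert (H := Hm R HR0 x a y x a x (Rr x) (Rr a) (Rs _ _ Hxy)).
        rewrite (m2 x a) in H. exact H. }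
      intros a b h; induction h.
      - apply join_incl_l. split.
        + apply Rt with x; [apply Hx| apply Rs, Hx].
        + apply Hm; [exact HS | exact (proj1 HS x) | exact H | exact (proj1 HS y)].
      - apply join_incl_r. split.
        + apply Rt with x; [apply Hx| apply Rs, Hx].
        + apply Hm; [exact HU | exact (proj1 HU x) | exact H | exact (proj1 HU y)].
      - eapply join_trans; eauto. }
    specialize (K _ _ Htc). rewrite (m1 x y), (m3 y x) in K. exact K.
  - intros H. apply H.
    + apply meet_cong; auto. apply join_cong.
    + intros a b [h1 h2]. split; auto. apply join_incl_l; auto.
    + intros a b [h1 h2]. split; auto. apply join_incl_r; auto.
Qed.

Lemma Rjn {T : Type} {jn : T -> T -> T} {cm : T -> T} {R} :
  congruence jn cm R -> forall a b a' b', R a a' -> R b b' -> R (jn a b) (jn a' b').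
Proof. intros [_ [_ [_ [d _]]]]. auto. Qed.
Lemma Rcm {T : Type} {jn : T -> T -> T} {cm : T -> T} {R} :
  congruence jn cm R -> forall a a', R a a' -> R (cm a) (cm a').
Proof. intros [_ [_ [_ [_ e]]]]. auto. Qed.
Lemma Rmt {T : Type} {jn : T -> T -> T} {cm : T -> T} {R} :
  congruence jn cm R -> forall a b a' b', R a a' -> R b b' -> R (mt jn cm a b) (mt jn cm a' b').
Proof. intros HR a b a' b' h1 h2. unfold mt. apply (Rcm HR), (Rjn HR); apply (Rcm HR); auto. Qed.
Lemma Rrefl {T : Type} {jn : T -> T -> T} {cm : T -> T} {R} :
  congruence jn cm R -> forall a, R a a.
Proof. intros [a _]. auto. Qed.
Lemma Rsym {T : Type} {jn : T -> T -> T} {cm : T -> T} {R} :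
  congruence jn cm R -> forall a b, R a b -> R b a.
Proof. intros [_ [b _]]. auto. Qed.
Lemma Rtr {T : Type} {jn : T -> T -> T} {cm : T -> T} {R} :
  congruence jn cm R -> forall a b c, R a b -> R b c -> R a c.
Proof. intros [_ [_ [c _]]]. eauto. Qed.

Definition maj {T : Type} (jn : T -> T -> T) (cm : T -> T) x y z :=
  jn (jn (mt jn cm x y) (mt jn cm y z)) (mt jn cm z x).

Lemma part1_gen (T : Type) (jn : T -> T -> T) (cm : T -> T) :
  (forall x, jn x x = x) -> (forall x y, jn x y = jn y x) ->
  (forall x y, jn (mt jn cm x y) x = x) -> (forall x, cm (cm x) = x) ->
  con_distributive jn cm.
Proof.
  intros Hid Hc Hii Hiv.
  assert (mc : forall x y, mt jn cm x y = mt jn cm y x) by (intros; unfold mt; rewrite Hc; auto).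
  assert (mi : forall x, mt jn cm x x = x) by (intros; unfold mt; rewrite Hid, Hiv; auto).
  assert (ab1 : forall x y, jn x (mt jn cm x y) = x) by (intros; rewrite Hc; auto).
  assert (ab2 : forall x y, jn x (mt jn cm y x) = x) by (intros; rewrite mc; auto).
  assert (ab3 : forall x y, jn (mt jn cm y x) x = x) by (intros; rewrite mc; auto).
  apply (@maj_cd T jn cm (maj jn cm)).
  - intros R HR a b c a' b' c' h1 h2 h3. unfold maj.
    apply (Rjn HR); [apply (Rjn HR)|]; apply (Rmt HR); auto.
  - intros x y. unfold maj. rewrite mi, ab1, ab2. reflexivity.
  - intros x y. unfold maj. rewrite (mc y x), Hid, mi, Hii. reflexivity.
  - intros x y. unfold maj. rewrite mi, ab3, ab1. reflexivity.
Qed.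
Arguments Rmt {T jn cm R} HR {a b a' b'}.
Arguments Rjn {T jn cm R} HR {a b a' b'}.
Arguments Rcm {T jn cm R} HR {a a'}.

Definition malc {T : Type} (jn : T -> T -> T) (cm : T -> T) x y z :=
  mt jn cm (jn x (mt jn cm (jn x z) (jn x (mt jn cm (cm x) (cm y)))))
           (jn z (mt jn cm (cm y) (jn x y))).
Definition dd {T : Type} (jn : T -> T -> T) (cm : T -> T) x y :=
  jn (mt jn cm (jn x y) (cm x)) (mt jn cm (jn x y) (cm y)).

Lemma part2_gen (T : Type) (jn : T -> T -> T) (cm : T -> T) (zero one : T) :
  in_variety_W jn cm zero one ->
  con_permutable jn cm /\ con_distributive jn cm /\ con_regular jn cm.
Proof.
  intros [[Hid [Hc [Ha [H0 H1]]]] [Hii [Hiii [Hiv Hi']]]].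
  assert (mc : forall x y, mt jn cm x y = mt jn cm y x) by (intros; unfold mt; rewrite Hc; auto).
  assert (mi : forall x, mt jn cm x x = x) by (intros; unfold mt; rewrite Hid, Hiv; auto).
  assert (letr : forall x y z, jn x y = y -> jn y z = z -> jn x z = z).
  { intros x y z h1 h2. pose proof (Ha x y z) as h. rewrite h1, h2 in h. exact h. }
  assert (lejl : forall x y, jn x (jn x y) = jn x y).
  { intros x y. pose proof (Ha x y (jn x y)) as h. rewrite Hid in h. exact h. }
  assert (lejr : forall x y, jn y (jn x y) = jn x y).
  { intros x y. rewrite (Hc x y). apply lejl. }
  assert (anti : forall x y, jn x y = y -> jn (cm y) (cm x) = cm x).
  { intros x y h. pose proof (Hii (cm x) (cm y)) as h'. unfold mt in h'.
    rewrite !Hiv, h in h'. exact h'. }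
  assert (lemt : forall x y, jn x y = y -> mt jn cm x y = x).
  { intros x y h. unfold mt. apply anti in h. rewrite Hc, h, Hiv. reflexivity. }
  assert (le0 : forall x, jn zero x = x) by (intros; rewrite Hc; auto).
  assert (le1 : forall x, jn x one = one) by auto.
  assert (cm1 : cm one = zero).
  { pose proof (anti (cm zero) one (le1 _)) as h. rewrite Hiv in h. rewrite <- h, H0. reflexivity. }
  assert (cm0 : cm zero = one) by (rewrite <- cm1, Hiv; reflexivity).
  assert (compl : forall x, jn x (cm x) = one).
  { intros x. pose proof (Hiii x zero) as h. rewrite !H0 in h. exact h. }
  assert (mtc : forall x, mt jn cm x (cm x) = zero).
  { intros x. unfold mt. rewrite Hiv, Hc, compl. exact cm1. }
  assert (orth : forall x y, jn x y = y -> mt jn cm x (cm y) = zero).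
  { intros x y h. unfold mt. rewrite Hiv. pose proof (Hiii x y) as h'. rewrite h in h'.
    rewrite lejr in h'. rewrite h'. exact cm1. }
  assert (HO : forall u v, jn u v = v -> jn v (jn u (mt jn cm (cm u) v)) = jn u (mt jn cm (cm u) v)).
  { intros u v h. pose proof (Hi' u v zero) as h'. unfold dle in h'. rewrite h, !H0 in h'. exact h'. }
  assert (recov : forall u v, jn u v = v -> mt jn cm v (jn u (mt jn cm v (cm u))) = v).
  { intros u v h. apply lemt. rewrite (mc v). apply HO; auto. }
  assert (drecov : forall a b, jn a b = b -> jn a (mt jn cm b (jn a (cm b))) = a).
  { intros a b h. apply anti in h. pose proof (HO _ _ h) as h'. apply anti in h'.
    rewrite !Hiv in h'. rewrite Hc.
    replace (mt jn cm b (jn a (cm b))) with (cm (jn (cm b) (mt jn cm b (cm a)))).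
    - exact h'.
    - unfold mt. rewrite !Hiv. rewrite (Hc a (cm b)). reflexivity. }
  assert (malc_c : forall R, congruence jn cm R -> forall a b c a' b' c',
            R a a' -> R b b' -> R c c' -> R (malc jn cm a b c) (malc jn cm a' b' c')).
  { intros R HR a b c a' b' c' h1 h2 h3. unfold malc.
    repeat first [apply (Rmt HR) | apply (Rjn HR) | apply (Rcm HR) | assumption]. }
  assert (dd_c : forall R, congruence jn cm R -> forall a b a' b',
            R a a' -> R b b' -> R (dd jn cm a b) (dd jn cm a' b')).
  { intros R HR a b a' b' h1 h2. unfold dd.
    repeat first [apply (Rmt HR) | apply (Rjn HR) | apply (Rcm HR) | assumption]. }
  assert (malc1 : forall x z, malc jn cm x x z = z).
  { intros x z. unfold malc. rewrite mi, compl, (lemt (jn x z) one (le1 _)).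
    rewrite lejl, Hid, (mc (cm x) x), mtc, H0, mc. apply lemt. apply lejr. }
  assert (malc2 : forall x z, malc jn cm x z z = x).
  { intros x z. unfold malc.
    replace (mt jn cm (cm x) (cm z)) with (cm (jn x z)) by (unfold mt; rewrite !Hiv; reflexivity).
    rewrite drecov by apply lejl. apply lemt.
    apply letr with (jn x z). apply lejl.
    apply HO. apply lejr. }
  assert (ddxx : forall x, dd jn cm x x = zero).
  { intros x. unfold dd. rewrite !Hid, mtc. reflexivity. }
  assert (ddR : forall R, congruence jn cm R -> forall x y, R (dd jn cm x y) zero -> R x y).
  { intros R HR x y h. unfold dd in h.
    set (s := jn x y) in *. set (a := mt jn cm s (cm x)) in *. set (b := mt jn cm s (cm y)) in *.
    assert (ha : R a zero).
    { pose proof (Rmt HR (Rrefl HR a) h) as h'. rewrite lemt in h' by apply lejl.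
      rewrite mc, lemt in h' by apply le0. exact h'. }
    assert (hb : R b zero).
    { pose proof (Rmt HR (Rrefl HR b) h) as h'. rewrite lemt in h' by apply lejr.
      rewrite mc, lemt in h' by apply le0. exact h'. }
    assert (hx : R s x).
    { pose proof (Rmt HR (Rrefl HR s) (Rjn HR (Rrefl HR x) ha)) as h'.
      unfold a in h'. rewrite recov in h' by apply lejl. rewrite H0, mc, lemt in h' by apply lejl.
      exact h'. }
    assert (hy : R s y).
    { pose proof (Rmt HR (Rrefl HR s) (Rjn HR (Rrefl HR y) hb)) as h'.
      unfold b in h'. rewrite recov in h' by apply lejr. rewrite H0, mc, lemt in h' by apply lejr.
      exact h'. }
    apply (Rtr HR) with s; [apply (Rsym HR)|]; assumption. }
  assert (reg_dir : forall R S, congruence jn cm R -> congruence jn cm S ->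
            forall a, (forall x, R a x <-> S a x) -> forall x y, R x y -> S x y).
  { intros R S HR HS a Hreg x y hxy.
    apply ddR; auto.
    set (u := dd jn cm x y).
    assert (hu : R u zero) by (rewrite <- (ddxx x); apply dd_c; [exact HR | apply (Rrefl HR) | apply (Rsym HR); exact hxy]).
    assert (h1 : S a (jn a u)).
    { apply Hreg. apply (Rsym HR). pose proof (Rjn HR (Rrefl HR a) hu) as h. rewrite H0 in h. exact h. }
    assert (h2 : S a (mt jn cm a (cm u))).
    { apply Hreg. apply (Rsym HR). pose proof (Rmt HR (Rrefl HR a) (Rcm HR hu)) as h.
      rewrite cm0, (lemt a one (le1 a)) in h. exact h. }
    assert (k1 : S u (mt jn cm u a)).
    { pose proof (Rmt HS (Rrefl HS u) h1) as h. rewrite (lemt u (jn a u)) in h by apply lejr.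
      apply (Rsym HS). exact h. }
    assert (k2 : S u (mt jn cm u (cm a))).
    { pose proof (Rmt HS (Rrefl HS u) (Rcm HS h2)) as h.
      replace (cm (mt jn cm a (cm u))) with (jn (cm a) u) in h by (unfold mt; rewrite !Hiv; reflexivity).
      rewrite (lemt u (jn (cm a) u)) in h by apply lejr. apply (Rsym HS). exact h. }
    set (b := mt jn cm u a) in *. set (c := mt jn cm u (cm a)) in *.
    assert (hbc : S b c) by (apply (Rtr HS) with u; [apply (Rsym HS)|]; auto).
    assert (hb0 : S b zero).
    { pose proof (Rmt HS (Rrefl HS b) hbc) as h. rewrite mi in h.
      assert (lc : jn c (cm a) = cm a) by (unfold c; rewrite mc; apply Hii).
      apply anti in lc. rewrite Hiv in lc.
      assert (lb : jn b a = a) by (unfold b; rewrite mc; apply Hii).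
      pose proof (orth b (cm c) (letr _ _ _ lb lc)) as o. rewrite Hiv in o.
      rewrite o in h. exact h. }
    apply (Rtr HS) with b; auto. }
  split; [|split].
  -
    assert (half : forall R S, congruence jn cm R -> congruence jn cm S -> forall x y,
               (exists z, R x z /\ S z y) -> exists z, S x z /\ R z y).
    { intros R S HR HS x y [z [h1 h2]]. exists (malc jn cm x z y). split.
      - apply (Rsym HS).
        pose proof (malc_c S HS x z y x z z (Rrefl HS x) (Rrefl HS z) (Rsym HS _ _ h2)) as E.
        rewrite (malc2 x z) in E. exact E.
      - pose proof (malc_c R HR x z y z z y h1 (Rrefl HR z) (Rrefl HR y)) as E.
        rewrite (malc1 z y) in E. exact E. }
    intros R S HR HS x y. split; apply half; auto.
  - apply part1_gen; auto.
  - intros R S HR HS a Hreg x y. split.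
    + apply reg_dir with a; auto.
    + apply reg_dir with a; auto. intro z; split; apply Hreg.
Qed.

Theorem mainTheorem7 :
  (forall (T : Type) (jn : T -> T -> T) (cm : T -> T) (zero one : T),
      in_class_A jn cm zero one -> con_distributive jn cm) /\
  (forall (T : Type) (jn : T -> T -> T) (cm : T -> T) (zero one : T),
      in_variety_W jn cm zero one ->
      con_permutable jn cm /\ con_distributive jn cm /\ con_regular jn cm).
Proof.
  split.
  - intros T jn cm zero one [[Hid [Hc _]] [_ [Hii [_ Hiv]]]]. apply part1_gen; auto.
  - apply part2_gen.
Qed.
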